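(* Let $\mathcal{H}$ be a complex Hilbert space, $R,S\in\mathbb{B}(\mathcal{H})$, and let $T=\begin{bmatrix}0&R\\ S&0\end{bmatrix}$, regarded as an operator on $\mathcal{H}\oplus\mathcal{H}$. If $(\|R\|+\|S\|)^2\le 2\,g(T)$, where \[ g(T)=\|T\|^2+\max\big(\alpha(T),\alpha(T^* )\big)-D(T), \] then \[ \omega(T)=\frac{\|R\|+\|S\|}{2}. \]
   Context: $\mathbb{B}(\mathcal{H})$ denotes the bounded linear operators on $\mathcal{H}$. For a bounded operator $A$ on a Hilbert space $\mathcal{K}$ (here $\mathcal{K}=\mathcal{H}\oplus\mathcal{H}$): $\omega(A)=\sup\{|\langle Ax,x\rangle| : x\in\mathcal{K},\ \|x\|=1\}$ (numerical radius); $\|A\|$ is the operator norm; $\alpha(A)=\inf_{\|x\|=1}\|Ax\|^2$; $D(A)=2\min(\|A_1\|^2,\|A_2\|^2)$ where $A_1=\frac{A+A^*}{2}$, $A_2=\frac{A-A^*}{2i}$. *)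

(* Defs.v *)
From Stdlib Require Import Reals Lra ClassicalEpsilon.
Open Scope R_scope.

Record Cplx := mkC { re : R; im : R }.
Definition C0 := mkC 0 0.
Definition C1 := mkC 1 0.
Definition Cadd (a b : Cplx) := mkC (re a + re b) (im a + im b).
Definition Cmul (a b : Cplx) :=
  mkC (re a * re b - im a * im b) (re a * im b + im a * re b).
Definition Cconj (a : Cplx) := mkC (re a) (- im a).
Definition Cmod (a : Cplx) := sqrt (re a ^ 2 + im a ^ 2).

(** * Real supremum / infimum (total, classical).
    Rsup E is the least upper bound when E is nonempty and bounded above,
    and 0 otherwise; Rinf E := - Rsup (-E). *)
Definition Rsup (E : R -> Prop) : R :=
  match excluded_middle_informative (bound E /\ exists x, E x) with
  | left h => proj1_sig (completeness E (proj1 h) (proj2 h))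
  | right _ => 0
  end.
Definition Rinf (E : R -> Prop) : R := - Rsup (fun r => E (- r)).

Record IPS := mkIPS {
  ips_car :> Type;
  ips_add : ips_car -> ips_car -> ips_car;
  ips_scal : Cplx -> ips_car -> ips_car;
  ips_ip : ips_car -> ips_car -> Cplx }.

Record CHilbert := {
  hcar :> Type;
  vzero : hcar;
  vadd : hcar -> hcar -> hcar;
  vopp : hcar -> hcar;
  vscal : Cplx -> hcar -> hcar;
  vinner : hcar -> hcar -> Cplx;
  vadd_assoc : forall x y z, vadd x (vadd y z) = vadd (vadd x y) z;
  vadd_comm : forall x y, vadd x y = vadd y x;
  vadd_0 : forall x, vadd x vzero = x;
  vadd_opp : forall x, vadd x (vopp x) = vzero;
  vscal_1 : forall x, vscal C1 x = x;
  vscal_assoc : forall a b x, vscal a (vscal b x) = vscal (Cmul a b) x;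
  vscal_distr_v : forall a x y, vscal a (vadd x y) = vadd (vscal a x) (vscal a y);
  vscal_distr_c : forall a b x, vscal (Cadd a b) x = vadd (vscal a x) (vscal b x);
  inner_add_l : forall x y z, vinner (vadd x y) z = Cadd (vinner x z) (vinner y z);
  inner_scal_l : forall a x y, vinner (vscal a x) y = Cmul a (vinner x y);
  inner_conj : forall x y, vinner y x = Cconj (vinner x y);
  inner_pos : forall x, 0 <= re (vinner x x);
  inner_def : forall x, vinner x x = C0 -> x = vzero;
  complete : forall u : nat -> hcar,
    (forall eps, eps > 0 -> exists N, forall m n, (m >= N)%nat -> (n >= N)%nat ->
        sqrt (re (vinner (vadd (u m) (vopp (u n))) (vadd (u m) (vopp (u n))))) < eps) ->
    exists l, forall eps, eps > 0 -> exists N, forall n, (n >= N)%nat ->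
        sqrt (re (vinner (vadd (u n) (vopp l)) (vadd (u n) (vopp l)))) < eps }.

Definition hnorm (H : CHilbert) (x : H) : R := sqrt (re (vinner H x x)).

Definition bounded_linear (H : CHilbert) (A : H -> H) : Prop :=
  (forall x y, A (vadd H x y) = vadd H (A x) (A y)) /\
  (forall a x, A (vscal H a x) = vscal H a (A x)) /\
  (exists M, forall x, hnorm H (A x) <= M * hnorm H x).

Definition is_adjoint (H : CHilbert) (A Aa : H -> H) : Prop :=
  forall x y, vinner H (A x) y = vinner H x (Aa y).

Definition dsum (H : CHilbert) : IPS :=
  mkIPS (H * H)
    (fun z w => (vadd H (fst z) (fst w), vadd H (snd z) (snd w)))
    (fun a z => (vscal H a (fst z), vscal H a (snd z)))
    (fun z w => Cadd (vinner H (fst z) (fst w)) (vinner H (snd z) (snd w))).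

Section Ops.
Variable K : IPS.
Definition ipnorm (x : K) : R := sqrt (re (ips_ip K x x)).
Definition opnorm (A : K -> K) : R :=
  Rsup (fun r => exists x, ipnorm x <= 1 /\ r = ipnorm (A x)).
Definition numrad (A : K -> K) : R :=
  Rsup (fun r => exists x, ipnorm x = 1 /\ r = Cmod (ips_ip K (A x) x)).
Definition alpha (A : K -> K) : R :=
  Rinf (fun r => exists x, ipnorm x = 1 /\ r = ipnorm (A x) ^ 2).
(* D(A) = 2 min(||A_1||^2, ||A_2||^2), A_1 = (A+A^* )/2, A_2 = (A-A^* )/(2i);
   Aa is the adjoint A^* *)
Definition Dq (A Aa : K -> K) : R :=
  2 * Rmin
    (opnorm (fun x => ips_scal K (mkC (1/2) 0) (ips_add K (A x) (Aa x))) ^ 2)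
    (opnorm (fun x => ips_scal K (mkC 0 (-(1/2)))
                        (ips_add K (A x) (ips_scal K (mkC (-1) 0) (Aa x)))) ^ 2).
Definition gq (A Aa : K -> K) : R :=
  opnorm A ^ 2 + Rmax (alpha A) (alpha Aa) - Dq A Aa.
End Ops.

(** T = [[0, R],[S, 0]] on H (+) H, and its adjoint [[0, S^*],[R^*, 0]]. *)
Definition offdiag (H : CHilbert) (A B : H -> H) : dsum H -> dsum H :=
  fun z => (A (snd z), B (fst z)).

Definition hopnorm (H : CHilbert) (A : H -> H) : R :=
  Rsup (fun r => exists x, hnorm H x <= 1 /\ r = hnorm H (A x)).

(* Main.v *)
Require Import Defs.
From Stdlib Require Import Reals Lra Psatz ClassicalEpsilon Classical.
Open Scope R_scope.

Lemma Rsup_ub (E : R -> Prop) x : bound E -> E x -> x <= Rsup E.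
Proof.
  intros Hb Hx. unfold Rsup.
  destruct (excluded_middle_informative _) as [h|h].
  - destruct (completeness E _ _) as [s [Hs1 Hs2]]. simpl. apply Hs1; auto.
  - exfalso; apply h; split; eauto.
Qed.

Lemma Rsup_le (E : R -> Prop) M : (forall x, E x -> x <= M) -> 0 <= M -> Rsup E <= M.
Proof.
  intros H0 HM. unfold Rsup.
  destruct (excluded_middle_informative _) as [h|h].
  - destruct (completeness E _ _) as [s [Hs1 Hs2]]. simpl. apply Hs2. intros x Hx; auto.
  - lra.
Qed.

Lemma Rsup_nonneg (E : R -> Prop) : (forall x, E x -> 0 <= x) -> 0 <= Rsup E.
Proof.
  intros H0. unfold Rsup.
  destruct (excluded_middle_informative _) as [h|h].
  - destruct (completeness E _ _) as [s [Hs1 Hs2]]. simpl.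
    destruct h as [_ [x Hx]]. specialize (Hs1 x Hx). specialize (H0 x Hx). lra.
  - lra.
Qed.

Lemma Rinf_lb (E : R -> Prop) m x : (forall y, E y -> m <= y) -> E x -> Rinf E <= x.
Proof.
  intros H0 Hx. unfold Rinf.
  assert (- x <= Rsup (fun r => E (- r))).
  { apply Rsup_ub. exists (- m). intros r Hr. specialize (H0 _ Hr). lra.
    rewrite Ropp_involutive. auto. }
  lra.
Qed.

Lemma Rinf_empty (E : R -> Prop) : (forall x, ~ E x) -> Rinf E = 0.
Proof.
  intros H0. unfold Rinf, Rsup.
  destruct (excluded_middle_informative _) as [h|h].
  - exfalso. destruct h as [_ [x Hx]]. eapply H0; eauto.
  - lra.
Qed.

Lemma le_sqrt_of_sq x y : x * x <= y -> x <= sqrt y.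
Proof.
  intros H. destruct (Rle_or_lt x 0). pose proof (sqrt_pos y); lra.
  rewrite <- (sqrt_square x) by lra. apply sqrt_le_1_alt; auto.
Qed.

Lemma sqrt_le_of_sq y s : 0 <= s -> y <= s * s -> sqrt y <= s.
Proof.
  intros Hs H. rewrite <- (sqrt_square s) by lra. apply sqrt_le_1_alt; auto.
Qed.

Lemma sqrt_sq_le x s : 0 <= x -> 0 <= s -> sqrt x <= s -> x <= s * s.
Proof.
  intros Hx Hs H. pose proof (sqrt_pos x). rewrite <- (sqrt_sqrt x) by lra.
  apply Rmult_le_compat; lra.
Qed.

Lemma Ceq a b : re a = re b -> im a = im b -> a = b.
Proof. destruct a, b; simpl; intros; subst; reflexivity. Qed.

Definition cm2 (p : Cplx) := re p ^ 2 + im p ^ 2.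

Lemma Cmod_cm2 p : Cmod p = sqrt (cm2 p).
Proof. reflexivity. Qed.

Lemma Cmod_nonneg p : 0 <= Cmod p.
Proof. apply sqrt_pos. Qed.

Lemma cm2_nonneg p : 0 <= cm2 p.
Proof. unfold cm2; nra. Qed.

Lemma Cmod_sq p : Cmod p * Cmod p = cm2 p.
Proof. unfold Cmod. apply sqrt_sqrt. unfold cm2 in *. nra. Qed.

Lemma re_le_Cmod p : re p <= Cmod p /\ - re p <= Cmod p /\ im p <= Cmod p /\ - im p <= Cmod p.
Proof.
  unfold Cmod. repeat split; apply le_sqrt_of_sq; nra.
Qed.

Lemma le_prod_of_sq x u v : 0 <= u -> 0 <= v -> x * x <= (u*u)*(v*v) -> x <= u * v.
Proof. intros. destruct (Rle_or_lt x (u*v)); auto. assert (0 <= u*v) by nra. nra. Qed.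

Lemma Cmod_add p q : Cmod (Cadd p q) <= Cmod p + Cmod q.
Proof.
  pose proof (Cmod_sq p). pose proof (Cmod_sq q). pose proof (Cmod_nonneg p).
  pose proof (Cmod_nonneg q).
  assert (re p * re q + im p * im q <= Cmod p * Cmod q).
  { apply le_prod_of_sq; auto. rewrite H, H0. unfold cm2.
    pose proof (pow2_ge_0 (re p * im q - im p * re q)). nra. }
  unfold Cmod at 1. apply sqrt_le_of_sq. lra.
  unfold cm2 in *. destruct p as [a b]; destruct q as [c d]; simpl in *. nra.
Qed.

Definition good (K : IPS) : Prop :=
  (forall x y z, ips_ip K (ips_add K x y) z = Cadd (ips_ip K x z) (ips_ip K y z)) /\
  (forall a x y, ips_ip K (ips_scal K a x) y = Cmul a (ips_ip K x y)) /\
  (forall x y, ips_ip K y x = Cconj (ips_ip K x y)) /\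
  (forall x, 0 <= re (ips_ip K x x)).

Lemma ip_addl {K} (HK : good K) x y z :
  ips_ip K (ips_add K x y) z = Cadd (ips_ip K x z) (ips_ip K y z).
Proof. apply HK. Qed.
Lemma ip_scall {K} (HK : good K) a x y :
  ips_ip K (ips_scal K a x) y = Cmul a (ips_ip K x y).
Proof. apply HK. Qed.
Lemma ip_conj {K} (HK : good K) x y : ips_ip K y x = Cconj (ips_ip K x y).
Proof. apply HK. Qed.
Lemma ip_pos {K} (HK : good K) x : 0 <= re (ips_ip K x x).
Proof. apply HK. Qed.
Lemma ip_addr {K} (HK : good K) x y z :
  ips_ip K x (ips_add K y z) = Cadd (ips_ip K x y) (ips_ip K x z).
Proof.
  rewrite (ip_conj HK (ips_add K y z) x), ip_addl by auto.
  rewrite (ip_conj HK x y), (ip_conj HK x z).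
  apply Ceq; simpl; lra.
Qed.
Lemma ip_scalr {K} (HK : good K) a x y :
  ips_ip K x (ips_scal K a y) = Cmul (Cconj a) (ips_ip K x y).
Proof.
  rewrite (ip_conj HK (ips_scal K a y) x), ip_scall by auto.
  rewrite (ip_conj HK x y).
  apply Ceq; simpl; lra.
Qed.
Lemma ip_self {K} (HK : good K) x : ips_ip K x x = mkC (re (ips_ip K x x)) 0.
Proof.
  pose proof (ip_conj HK x x) as H. apply Ceq; simpl; auto.
  destruct (ips_ip K x x) as [a b]; simpl in *. injection H. lra.
Qed.

Ltac ipexp HK :=
  repeat (rewrite ?(ip_addl HK), ?(ip_addr HK), ?(ip_scall HK), ?(ip_scalr HK)).

Lemma CS2 {K} (HK : good K) x y :
  cm2 (ips_ip K x y) <= re (ips_ip K x x) * re (ips_ip K y y).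
Proof.
  assert (E : forall s t, 0 <= s*s*re (ips_ip K x x) - 2*s*t*cm2 (ips_ip K x y)
                   + t*t*cm2 (ips_ip K x y) * re (ips_ip K y y)).
  { intros s t.
    pose proof (ip_pos HK (ips_add K (ips_scal K (mkC s 0) x)
                             (ips_scal K (Cmul (mkC (-t) 0) (ips_ip K x y)) y))) as P.
    ipexp HK. revert P. ipexp HK.
    rewrite (ip_conj HK x y), (ip_self HK x), (ip_self HK y).
    unfold cm2. simpl. intro P. nra. }
  pose proof (ip_pos HK x). pose proof (ip_pos HK y). pose proof (cm2_nonneg (ips_ip K x y)).
  set (a := re (ips_ip K x x)) in *. set (b := re (ips_ip K y y)) in *.
  set (q := cm2 (ips_ip K x y)) in *.
  destruct (Req_dec b 0) as [Hb|Hb].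
  - destruct (Req_dec q 0) as [Hq|Hq]. nra.
    specialize (E 1 ((a+1)/(2*q))). rewrite Hb in E.
    assert (2 * 1 * ((a + 1) / (2 * q)) * q = a + 1) by (field; auto). nra.
  - specialize (E b 1). assert (0 < b) by lra.
    assert (b * (b*a - q) >= 0) by nra.
    destruct (Rle_or_lt q (a*b)); auto. nra.
Qed.

Lemma ipnorm_nonneg K x : 0 <= ipnorm K x.
Proof. apply sqrt_pos. Qed.

Lemma ipnorm_sq {K} (HK : good K) x : ipnorm K x * ipnorm K x = re (ips_ip K x x).
Proof. apply sqrt_sqrt. apply (ip_pos HK). Qed.

Lemma ipnorm_1 {K} (HK : good K) x : ipnorm K x = 1 <-> re (ips_ip K x x) = 1.
Proof.
  split; intro H.
  - rewrite <- (ipnorm_sq HK x), H; ring.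
  - unfold ipnorm; rewrite H; apply sqrt_1.
Qed.

Lemma ipnorm_le1 {K} (HK : good K) x : ipnorm K x <= 1 -> re (ips_ip K x x) <= 1.
Proof.
  intro H. rewrite <- (ipnorm_sq HK x). pose proof (ipnorm_nonneg K x). nra.
Qed.

Lemma CS {K} (HK : good K) x y : Cmod (ips_ip K x y) <= ipnorm K x * ipnorm K y.
Proof.
  unfold Cmod. apply sqrt_le_of_sq.
  pose proof (ipnorm_nonneg K x); pose proof (ipnorm_nonneg K y); nra.
  replace (ipnorm K x * ipnorm K y * (ipnorm K x * ipnorm K y))
    with ((ipnorm K x * ipnorm K x) * (ipnorm K y * ipnorm K y)) by ring.
  rewrite !(ipnorm_sq HK). apply (CS2 HK).
Qed.

Lemma N_scal {K} (HK : good K) r x :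
  re (ips_ip K (ips_scal K (mkC r 0) x) (ips_scal K (mkC r 0) x)) = r * r * re (ips_ip K x x).
Proof. ipexp HK. rewrite (ip_self HK x). simpl. ring. Qed.

Lemma ipnorm_scal {K} (HK : good K) r x : 0 <= r ->
  ipnorm K (ips_scal K (mkC r 0) x) = r * ipnorm K x.
Proof.
  intro Hr. unfold ipnorm. rewrite (N_scal HK). rewrite sqrt_mult.
  rewrite sqrt_square; auto. nra. apply (ip_pos HK).
Qed.

Lemma normalize {K} (HK : good K) x : 0 < re (ips_ip K x x) ->
  0 < ipnorm K x /\ ipnorm K (ips_scal K (mkC (/ ipnorm K x) 0) x) = 1.
Proof.
  intro H. assert (0 < ipnorm K x) by (apply sqrt_lt_R0; auto).
  split; auto. rewrite (ipnorm_scal HK). field. lra.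
  left; apply Rinv_0_lt_compat; auto.
Qed.

Lemma Cmod_ip_le {K} (HK : good K) x y : re (ips_ip K x y) <= ipnorm K x * ipnorm K y.
Proof. pose proof (re_le_Cmod (ips_ip K x y)). pose proof (CS HK x y). lra. Qed.

Lemma opnorm_bound {K} (HK : good K) (A : K -> K)
  (Ah : forall r x, A (ips_scal K (mkC r 0) x) = ips_scal K (mkC r 0) (A x))
  (Ab : exists M, forall x, ipnorm K (A x) <= M * ipnorm K x) :
  forall x, ipnorm K (A x) <= opnorm K A * ipnorm K x.
Proof.
  destruct Ab as [M HM]. intro x.
  assert (Hop : bound (fun r => exists x, ipnorm K x <= 1 /\ r = ipnorm K (A x))).
  { exists (Rabs M). intros r [z [Hz ->]]. specialize (HM z).
    pose proof (ipnorm_nonneg K z). pose proof (Rle_abs M). pose proof (Rabs_pos M). nra. }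
  destruct (Req_dec (re (ips_ip K x x)) 0) as [H0|H0].
  - assert (ipnorm K x = 0) by (unfold ipnorm; rewrite H0; apply sqrt_0).
    specialize (HM x). rewrite H in HM |- *. pose proof (ipnorm_nonneg K (A x)). lra.
  - destruct (normalize HK x) as [Hp Hu]. pose proof (ip_pos HK x); lra.
    set (u := ips_scal K (mkC (/ ipnorm K x) 0) x) in *.
    assert (ipnorm K (A u) <= opnorm K A).
    { apply Rsup_ub; auto. exists u; split; auto. lra. }
    unfold u in H. rewrite Ah, (ipnorm_scal HK) in H.
    2: left; apply Rinv_0_lt_compat; auto.
    apply (Rmult_le_compat_r (ipnorm K x)) in H; [|lra].
    replace (/ ipnorm K x * ipnorm K (A x) * ipnorm K x) with (ipnorm K (A x)) in H
      by (field; lra). auto.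
Qed.

Definition Hyps (K : IPS) (T Ta : K -> K) : Prop :=
  good K /\
  (forall x y, T (ips_add K x y) = ips_add K (T x) (T y)) /\
  (forall a x, T (ips_scal K a x) = ips_scal K a (T x)) /\
  (exists M, forall x, ipnorm K (T x) <= M * ipnorm K x) /\
  (forall x y, ips_ip K (T x) y = ips_ip K x (Ta y)).

Lemma om_set_bound {K T Ta} : Hyps K T Ta ->
  bound (fun r => exists x, ipnorm K x = 1 /\ r = Cmod (ips_ip K (T x) x)).
Proof.
  intros (HK & Tadd & Tscal & [M HM] & Tadj).
  exists (Rabs M). intros r [z [Hz ->]].
  pose proof (CS HK (T z) z). rewrite Hz in H. specialize (HM z). rewrite Hz in HM.
  pose proof (Rle_abs M). lra.
Qed.

Lemma om_nonneg K T : 0 <= numrad K T.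
Proof. apply Rsup_nonneg. intros r [z [_ ->]]. apply Cmod_nonneg. Qed.

Lemma om_unit {K T Ta} : Hyps K T Ta -> forall z, ipnorm K z = 1 ->
  Cmod (ips_ip K (T z) z) <= numrad K T.
Proof.
  intros H z Hz. apply Rsup_ub. eapply om_set_bound; eauto. exists z; auto.
Qed.

Lemma om_gen {K T Ta} : Hyps K T Ta -> forall w,
  cm2 (ips_ip K (T w) w) <= (numrad K T * re (ips_ip K w w)) ^ 2.
Proof.
  intros H w. pose proof H as (HK & Tadd & Tscal & [M HM] & Tadj).
  pose proof (om_nonneg K T) as Hom.
  destruct (Req_dec (re (ips_ip K w w)) 0) as [H0|H0].
  - assert (ipnorm K w = 0) by (unfold ipnorm; rewrite H0; apply sqrt_0).
    pose proof (CS HK (T w) w). rewrite H1, Rmult_0_r in H2.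
    rewrite <- Cmod_sq. pose proof (Cmod_nonneg (ips_ip K (T w) w)). nra.
  - destruct (normalize HK w) as [Hp Hu]. pose proof (ip_pos HK w); lra.
    pose proof (om_unit H _ Hu) as Hb.
    rewrite Tscal in Hb. revert Hb. ipexp HK. intro Hb.
    set (s := ipnorm K w) in *. set (p := ips_ip K (T w) w) in *.
    assert (E : cm2 (Cmul (mkC (/ s) 0) (Cmul (Cconj (mkC (/ s) 0)) p))
              = (/s)^4 * cm2 p) by (unfold cm2; simpl; ring).
    assert (cm2 (Cmul (mkC (/ s) 0) (Cmul (Cconj (mkC (/ s) 0)) p)) <= numrad K T ^ 2).
    { rewrite <- Cmod_sq. pose proof (Cmod_nonneg (Cmul (mkC (/ s) 0) (Cmul (Cconj (mkC (/ s) 0)) p))). nra. }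
    rewrite E in H1.
    assert (Hs2 : re (ips_ip K w w) = s * s) by (unfold s; rewrite (ipnorm_sq HK); auto).
    rewrite Hs2.
    apply (Rmult_le_compat_l (s^4)) in H1; [| apply pow_le; lra].
    replace (s ^ 4 * ((/ s) ^ 4 * cm2 p)) with (cm2 p) in H1 by (field; lra).
    replace ((numrad K T * (s * s)) ^ 2) with (s ^ 4 * numrad K T ^ 2) by ring. auto.
Qed.

Lemma om_parts {K T Ta} : Hyps K T Ta -> forall w,
  let p := ips_ip K (T w) w in let c := numrad K T * re (ips_ip K w w) in
  re p <= c /\ - re p <= c /\ im p <= c /\ - im p <= c.
Proof.
  intros H w p c. pose proof (om_gen H w) as G. fold p c in G.
  assert (0 <= c).
  { unfold c. pose proof (om_nonneg K T). destruct H as (HK & _).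
    pose proof (ip_pos HK w). nra. }
  unfold cm2 in G.
  assert (L : forall x, x * x <= c * c -> x <= c).
  { intros x Hx. destruct (Rle_or_lt x c); auto. nra. }
  repeat split; apply L; nra.
Qed.

Definition Bre (K : IPS) (T Ta : K -> K) x :=
  ips_scal K (mkC (1/2) 0) (ips_add K (T x) (Ta x)).
Definition Bim (K : IPS) (T Ta : K -> K) x :=
  ips_scal K (mkC 0 (-(1/2))) (ips_add K (T x) (ips_scal K (mkC (-1) 0) (Ta x))).

Lemma polar {K T Ta} : Hyps K T Ta -> forall x y,
  4 * re (ips_ip K (Bre K T Ta x) y) <= 2 * numrad K T * (re (ips_ip K x x) + re (ips_ip K y y)) /\
  4 * re (ips_ip K (Bim K T Ta x) y) <= 2 * numrad K T * (re (ips_ip K x x) + re (ips_ip K y y)).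
Proof.
  intros H x y. pose proof H as (HK & Tadd & Tscal & _ & Tadj).
  pose proof (om_parts H (ips_add K x y)) as P1.
  pose proof (om_parts H (ips_add K x (ips_scal K (mkC (-1) 0) y))) as P2.
  cbv zeta in P1, P2. rewrite Tadd in P1, P2. rewrite Tscal in P2.
  revert P1 P2. unfold Bre, Bim. ipexp HK.
  rewrite (ip_conj HK y (Ta x)), <- Tadj.
  rewrite (ip_conj HK x y), (ip_self HK x), (ip_self HK y).
  simpl. intros P1 P2. lra.
Qed.

Lemma Bbound {K T Ta} : Hyps K T Ta -> forall x, re (ips_ip K x x) <= 1 ->
  re (ips_ip K (Bre K T Ta x) (Bre K T Ta x)) <= numrad K T ^ 2 /\
  re (ips_ip K (Bim K T Ta x) (Bim K T Ta x)) <= numrad K T ^ 2.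
Proof.
  intros H x Hx. pose proof H as (HK & _).
  pose proof (om_nonneg K T) as Hom.
  assert (G : forall v, (forall y, 4 * re (ips_ip K v y) <= 2 * numrad K T * (re (ips_ip K x x) + re (ips_ip K y y)))
            -> re (ips_ip K v v) <= numrad K T ^ 2).
  { intros v Hv. pose proof (ip_pos HK v). pose proof (ip_pos HK x).
    set (w := numrad K T) in *. set (n := re (ips_ip K v v)) in *.
    assert (Ht : forall t, 4 * t * n <= 2 * w * (1 + t * t * n)).
    { intro t. specialize (Hv (ips_scal K (mkC t 0) v)). rewrite (N_scal HK) in Hv.
      revert Hv. ipexp HK. rewrite (ip_self HK v). simpl. fold n. intro Hv.
      assert (2 * w * re (ips_ip K x x) <= 2 * w * 1) by nra. nra. }
    destruct (Req_dec w 0) as [Hw|Hw].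
    - specialize (Ht 1). rewrite Hw in Ht |- *. nra.
    - specialize (Ht (/ w)). assert (0 < w) by lra.
      apply (Rmult_le_compat_l (w/2)) in Ht; [|lra].
      replace (w / 2 * (4 * / w * n)) with (2 * n) in Ht by (field; lra).
      replace (w / 2 * (2 * w * (1 + / w * / w * n))) with (w * w + n) in Ht by (field; lra).
      nra. }
  split; apply G; intro y; apply (polar H).
Qed.

Lemma Bsum {K T Ta} : Hyps K T Ta -> forall z,
  re (ips_ip K (Bre K T Ta z) (Bre K T Ta z)) + re (ips_ip K (Bim K T Ta z) (Bim K T Ta z))
  = (re (ips_ip K (T z) (T z)) + re (ips_ip K (Ta z) (Ta z))) / 2.
Proof.
  intros H z. pose proof H as (HK & _). unfold Bre, Bim. ipexp HK.
  rewrite (ip_conj HK (T z) (Ta z)), (ip_self HK (T z)), (ip_self HK (Ta z)).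
  simpl. field.
Qed.

Lemma Bop {K T Ta} : Hyps K T Ta -> forall z, re (ips_ip K z z) <= 1 ->
  re (ips_ip K (Bre K T Ta z) (Bre K T Ta z)) <= opnorm K (Bre K T Ta) ^ 2 /\
  re (ips_ip K (Bim K T Ta z) (Bim K T Ta z)) <= opnorm K (Bim K T Ta) ^ 2.
Proof.
  intros H z Hz. pose proof H as (HK & _). pose proof (om_nonneg K T).
  assert (G : forall B : K -> K, (forall x, re (ips_ip K x x) <= 1 -> re (ips_ip K (B x) (B x)) <= numrad K T ^ 2) ->
     re (ips_ip K (B z) (B z)) <= opnorm K B ^ 2).
  { intros B HB.
    assert (ipnorm K (B z) <= opnorm K B).
    { apply Rsup_ub. exists (numrad K T). intros r [x [Hx ->]].
      apply sqrt_le_of_sq; auto. apply ipnorm_le1 in Hx; auto. specialize (HB x Hx). nra.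
      exists z. split; auto. rewrite <- (ipnorm_sq HK z) in Hz.
      pose proof (ipnorm_nonneg K z). nra. }
    rewrite <- (ipnorm_sq HK). pose proof (ipnorm_nonneg K (B z)). nra. }
  split; apply G; intros; apply (Bbound H); auto.
Qed.

Definition Dv K T Ta := 2 * Rmin (opnorm K (Bre K T Ta) ^ 2) (opnorm K (Bim K T Ta) ^ 2).

Lemma keyP {K T Ta} : Hyps K T Ta -> forall z, re (ips_ip K z z) <= 1 ->
  re (ips_ip K (T z) (T z)) + re (ips_ip K (Ta z) (Ta z)) <= 2 * numrad K T ^ 2 + Dv K T Ta.
Proof.
  intros H z Hz. pose proof (Bsum H z). pose proof (Bop H z Hz). pose proof (Bbound H z Hz).
  unfold Dv, Rmin. destruct (Rle_dec _ _); lra.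
Qed.

Lemma alpha_le {K : IPS} (HK : good K) (A : K -> K) z : ipnorm K z = 1 ->
  alpha K A <= re (ips_ip K (A z) (A z)).
Proof.
  intro Hz. unfold alpha. apply Rinf_lb with (m := 0).
  intros y [x [_ ->]]. apply pow2_ge_0.
  exists z. split; auto. rewrite <- (ipnorm_sq HK). ring.
Qed.

Lemma alpha_empty (K : IPS) (A : K -> K) : (forall z, ipnorm K z <> 1) -> alpha K A = 0.
Proof.
  intro H. unfold alpha. apply Rinf_empty. intros r [x [Hx _]]. eapply H; eauto.
Qed.

Lemma opnorm_nonneg (K : IPS) (A : K -> K) : 0 <= opnorm K A.
Proof. apply Rsup_nonneg. intros r [x [_ ->]]. apply ipnorm_nonneg. Qed.

Lemma main_lower {K T Ta} : Hyps K T Ta -> gq K T Ta <= 2 * numrad K T ^ 2.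
Proof.
  intro H. pose proof H as (HK & Tadd & Tscal & [M HM] & Tadj).
  unfold gq.
  change (Dq K T Ta) with (Dv K T Ta).
  pose proof (om_nonneg K T) as Hom.
  assert (HD : 0 <= Dv K T Ta).
  { unfold Dv, Rmin. destruct (Rle_dec _ _); pose proof (pow2_ge_0 (opnorm K (Bre K T Ta)));
    pose proof (pow2_ge_0 (opnorm K (Bim K T Ta))); lra. }
  pose proof (opnorm_nonneg K T) as Hop.
  destruct (classic (exists u, ipnorm K u = 1)) as [[u0 Hu0]|Hno].
  - set (c := 2 * numrad K T ^ 2 + Dv K T Ta) in *.
    assert (U : forall z, ipnorm K z = 1 -> re (ips_ip K (T z) (T z)) <= c - alpha K Ta
                   /\ re (ips_ip K (Ta z) (Ta z)) <= c - alpha K T).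
    { intros z Hz. pose proof (keyP H z) as H0.
      assert (Hz1 : re (ips_ip K z z) <= 1) by (apply (ipnorm_le1 HK); lra).
      specialize (H0 Hz1).
      pose proof (alpha_le HK Ta z Hz). pose proof (alpha_le HK T z Hz). unfold c; split; lra. }
    destruct (U u0 Hu0) as [U1 U2].
    pose proof (ip_pos HK (T u0)). pose proof (ip_pos HK (Ta u0)).
    assert (O1 : opnorm K T <= sqrt (c - alpha K Ta)).
    { apply Rsup_le; [|apply sqrt_pos]. intros r [z [Hz ->]]. unfold ipnorm at 1.
      apply sqrt_le_1_alt.
      destruct (Req_dec (re (ips_ip K z z)) 0) as [Z0|Z0].
      - assert (Hz0 : ipnorm K z = 0) by (unfold ipnorm; rewrite Z0; apply sqrt_0).
        specialize (HM z). rewrite Hz0, Rmult_0_r in HM.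
        rewrite <- (ipnorm_sq HK). pose proof (ipnorm_nonneg K (T z)). nra.
      - destruct (normalize HK z) as [Hp Hu]. pose proof (ip_pos HK z); lra.
        destruct (U _ Hu) as [V _]. rewrite Tscal, (N_scal HK) in V.
        rewrite <- (ipnorm_sq HK z) in Z0.
        set (s := ipnorm K z) in *. set (n := re (ips_ip K (T z) (T z))) in *.
        apply (Rmult_le_compat_l (s*s)) in V; [|nra].
        replace (s * s * (/ s * / s * n)) with n in V by (field; lra).
        assert (s * s <= 1) by nra. nra. }
    assert (O2 : opnorm K T <= sqrt (c - alpha K T)).
    { apply Rsup_le; [|apply sqrt_pos]. intros r [z [Hz ->]].
      destruct (Req_dec (re (ips_ip K (T z) (T z))) 0) as [Z0|Z0].
      - unfold ipnorm. rewrite Z0, sqrt_0. apply sqrt_pos.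
      - destruct (normalize HK (T z)) as [Hp Hu]. pose proof (ip_pos HK (T z)); lra.
        set (r := ipnorm K (T z)) in *.
        set (w := ips_scal K (mkC (/ r) 0) (T z)) in *.
        destruct (U _ Hu) as [_ V].
        assert (E : re (ips_ip K (T z) w) = r).
        { unfold w. ipexp HK. rewrite (ip_self HK (T z)). simpl.
          rewrite <- (ipnorm_sq HK). fold r. field. lra. }
        rewrite Tadj in E.
        pose proof (Cmod_ip_le HK z (Ta w)).
        assert (ipnorm K (Ta w) <= sqrt (c - alpha K T)).
        { unfold ipnorm. apply sqrt_le_1_alt. auto. }
        pose proof (ipnorm_nonneg K z). pose proof (ipnorm_nonneg K (Ta w)).
        pose proof (sqrt_pos (c - alpha K T)). nra. }
    assert (S1 : opnorm K T ^ 2 <= c - alpha K Ta).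
    { pose proof (sqrt_sqrt (c - alpha K Ta)). simpl. nra. }
    assert (S2 : opnorm K T ^ 2 <= c - alpha K T).
    { pose proof (sqrt_sqrt (c - alpha K T)). simpl. nra. }
    unfold Rmax; destruct (Rle_dec _ _); unfold c in *; lra.
  - assert (Hno' : forall z, ipnorm K z <> 1) by (intros z Hz; apply Hno; eauto).
    rewrite (alpha_empty K T Hno'), (alpha_empty K Ta Hno').
    assert (opnorm K T <= 0).
    { apply Rsup_le; [|lra]. intros r [z [Hz ->]].
      destruct (Req_dec (re (ips_ip K z z)) 0) as [Z0|Z0].
      - specialize (HM z). unfold ipnorm at 2 in HM. rewrite Z0, sqrt_0 in HM. lra.
      - exfalso. destruct (normalize HK z) as [_ Hu]. pose proof (ip_pos HK z); lra.
        eapply Hno'; eauto. }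
    unfold Rmax; destruct (Rle_dec _ _). simpl. nra. nra.
Qed.

Definition HIPS (H : CHilbert) : IPS := mkIPS H (vadd H) (vscal H) (vinner H).

Lemma good_H (H : CHilbert) : good (HIPS H).
Proof.
  split; [|split; [|split]]; simpl.
  - apply inner_add_l.
  - apply inner_scal_l.
  - apply inner_conj.
  - apply inner_pos.
Qed.

Lemma good_dsum (H : CHilbert) : good (dsum H).
Proof.
  split; [|split; [|split]]; simpl.
  - intros x y z. rewrite !inner_add_l. apply Ceq; simpl; lra.
  - intros a x y. rewrite !inner_scal_l. apply Ceq; simpl; lra.
  - intros x y. rewrite (inner_conj H (fst x)), (inner_conj H (snd x)). apply Ceq; simpl; lra.
  - intros x. pose proof (inner_pos H (fst x)). pose proof (inner_pos H (snd x)). lra.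
Qed.

Lemma hyps_offdiag (H : CHilbert) (Rop Sop Ra Sa : H -> H) :
  bounded_linear H Rop -> bounded_linear H Sop ->
  is_adjoint H Rop Ra -> is_adjoint H Sop Sa ->
  Hyps (dsum H) (offdiag H Rop Sop) (offdiag H Sa Ra).
Proof.
  intros [Ra1 [Ra2 [Mr HMr]]] [Sa1 [Sa2 [Ms HMs]]] HRa HSa.
  split; [apply good_dsum|split; [|split; [|split]]].
  - intros [x1 x2] [y1 y2]. unfold offdiag; simpl. rewrite Ra1, Sa1. reflexivity.
  - intros a [x1 x2]. unfold offdiag; simpl. rewrite Ra2, Sa2. reflexivity.
  - exists (Rabs Mr + Rabs Ms). intros [x y]. unfold offdiag, ipnorm; simpl.
    pose proof (HMr y) as h1. pose proof (HMs x) as h2. unfold hnorm in h1, h2.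
    pose proof (inner_pos H x). pose proof (inner_pos H y).
    pose proof (inner_pos H (Rop y)). pose proof (inner_pos H (Sop x)).
    set (X := re (vinner H x x)) in *. set (Y := re (vinner H y y)) in *.
    set (P := re (vinner H (Rop y) (Rop y))) in *. set (Q := re (vinner H (Sop x) (Sop x))) in *.
    assert (hp : P <= Rabs Mr ^ 2 * Y).
    { pose proof (sqrt_pos P). pose proof (sqrt_pos Y). pose proof (Rle_abs Mr).
      pose proof (Rabs_pos Mr).
      assert (sqrt P <= Rabs Mr * sqrt Y) by nra.
      rewrite <- (sqrt_sqrt P), <- (sqrt_sqrt Y) by lra. nra. }
    assert (hq : Q <= Rabs Ms ^ 2 * X).
    { pose proof (sqrt_pos Q). pose proof (sqrt_pos X). pose proof (Rle_abs Ms).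
      pose proof (Rabs_pos Ms).
      assert (sqrt Q <= Rabs Ms * sqrt X) by nra.
      rewrite <- (sqrt_sqrt Q), <- (sqrt_sqrt X) by lra. nra. }
    pose proof (Rabs_pos Mr). pose proof (Rabs_pos Ms). pose proof (sqrt_pos (X + Y)).
    apply sqrt_le_of_sq. nra.
    replace ((Rabs Mr + Rabs Ms) * sqrt (X + Y) * ((Rabs Mr + Rabs Ms) * sqrt (X + Y)))
      with ((Rabs Mr + Rabs Ms) ^ 2 * (sqrt (X + Y) * sqrt (X + Y))) by ring.
    rewrite sqrt_sqrt by lra. assert (0 <= 2 * Rabs Mr * Rabs Ms + Rabs Ms ^ 2) by nra. assert (0 <= 2 * Rabs Mr * Rabs Ms + Rabs Mr ^ 2) by nra. nra.
  - intros [x1 x2] [y1 y2]. unfold offdiag; simpl. rewrite HRa, HSa.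
    apply Ceq; simpl; lra.
Qed.

Lemma upper (H : CHilbert) (Rop Sop : H -> H) :
  bounded_linear H Rop -> bounded_linear H Sop ->
  numrad (dsum H) (offdiag H Rop Sop) <= (hopnorm H Rop + hopnorm H Sop) / 2.
Proof.
  intros [Ra1 [Ra2 [Mr HMr]]] [Sa1 [Sa2 [Ms HMs]]].
  pose proof (good_H H) as HH.
  assert (Ha : 0 <= hopnorm H Rop) by (apply (opnorm_nonneg (HIPS H))).
  assert (Hb : 0 <= hopnorm H Sop) by (apply (opnorm_nonneg (HIPS H))).
  assert (BR : forall x, hnorm H (Rop x) <= hopnorm H Rop * hnorm H x).
  { apply (opnorm_bound (K := HIPS H) HH). intros; apply Ra2. exists Mr; auto. }
  assert (BS : forall x, hnorm H (Sop x) <= hopnorm H Sop * hnorm H x).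
  { apply (opnorm_bound (K := HIPS H) HH). intros; apply Sa2. exists Ms; auto. }
  apply Rsup_le; [|lra]. intros r [[x y] [Hz ->]].
  apply (ipnorm_1 (good_dsum H)) in Hz. simpl in Hz. unfold offdiag. simpl.
  pose proof (Cmod_add (vinner H (Rop y) x) (vinner H (Sop x) y)).
  pose proof (CS (K := HIPS H) HH (Rop y) x). pose proof (CS (K := HIPS H) HH (Sop x) y).
  change (ipnorm (HIPS H)) with (hnorm H) in *.
  pose proof (BR y). pose proof (BS x).
  pose proof (ipnorm_sq HH x). pose proof (ipnorm_sq HH y).
  change (ipnorm (HIPS H)) with (hnorm H) in *. simpl in *.
  pose proof (ipnorm_nonneg (HIPS H) x). pose proof (ipnorm_nonneg (HIPS H) y).
  change (ipnorm (HIPS H)) with (hnorm H) in *.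
  set (X := hnorm H x) in *. set (Y := hnorm H y) in *.
  assert (2 * X * Y <= 1) by (pose proof (pow2_ge_0 (X - Y)); nra).
  assert (Cmod (vinner H (Rop y) x) <= hopnorm H Rop * Y * X).
  { pose proof (ipnorm_nonneg (HIPS H) x). nra. }
  assert (Cmod (vinner H (Sop x) y) <= hopnorm H Sop * X * Y).
  { nra. }
  nra.
Qed.

Theorem corollary2p4 (H : CHilbert) (Rop Sop Ra Sa : H -> H) :
  bounded_linear H Rop -> bounded_linear H Sop ->
  is_adjoint H Rop Ra -> is_adjoint H Sop Sa ->
  (hopnorm H Rop + hopnorm H Sop) ^ 2
    <= 2 * gq (dsum H) (offdiag H Rop Sop) (offdiag H Sa Ra) ->
  numrad (dsum H) (offdiag H Rop Sop) = (hopnorm H Rop + hopnorm H Sop) / 2.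
Proof.
  intros HR HS HRa HSa Hg.
  pose proof (hyps_offdiag H Rop Sop Ra Sa HR HS HRa HSa) as Hy.
  pose proof (main_lower Hy) as L.
  pose proof (upper H Rop Sop HR HS) as U.
  pose proof (om_nonneg (dsum H) (offdiag H Rop Sop)) as W.
  assert (Ha : 0 <= hopnorm H Rop) by (apply (opnorm_nonneg (HIPS H))).
  assert (Hb : 0 <= hopnorm H Sop) by (apply (opnorm_nonneg (HIPS H))).
  set (w := numrad (dsum H) (offdiag H Rop Sop)) in *.
  set (s := hopnorm H Rop + hopnorm H Sop) in *.
  assert (s * s <= (2 * w) * (2 * w)) by (simpl in *; nra).
  assert (s <= 2 * w) by nra.
  lra.
Qed.
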